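(* Let $f:\mathbb{R}^2\to\mathbb{R}$ be a $C^\infty$ function that vanishes on the Hawaiian earring \[ \mathcal H=\bigcup_{n\ge1} C_n, \qquad C_n=\left\{(x,y)\in\mathbb{R}^2:\left(x-\tfrac1n\right)^2+y^2=\tfrac1{n^2}\right\}. \] Then $f$ is flat at the origin, i.e. \[ \frac{\partial^{\alpha_1+\alpha_2} f}{\partial x_1^{\alpha_1}\partial x_2^{\alpha_2}}(0,0)=0 \qquad \text{for all } (\alpha_1,\alpha_2)\in\mathbb{N}^2. \] *)

(* Defs.v *)
From Stdlib Require Import Reals List.
From Coquelicot Require Import Coquelicot.
Open Scope R_scope.

Definition line (g : R * R -> R) (i : bool) (p : R * R) : R -> R :=
  fun t => if i then g (fst p, t) else g (t, snd p).

Definition coord (i : bool) (p : R * R) : R := if i then snd p else fst p.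

Definition pd (i : bool) (g : R * R -> R) : R * R -> R :=
  fun p => Derive (line g i p) (coord i p).

Definition pdw (w : list bool) (g : R * R -> R) : R * R -> R :=
  fold_right pd g w.

Definition smooth2 (f : R * R -> R) : Prop :=
  forall w : list bool,
    (forall p, continuous (pdw w f) p) /\
    (forall (i : bool) p, ex_derive (line (pdw w f) i p) (coord i p)).

Definition circle_C (n : nat) (p : R * R) : Prop :=
  (fst p - / INR n) ^ 2 + (snd p) ^ 2 = / (INR n) ^ 2.

Definition hawaiian (p : R * R) : Prop :=
  exists n : nat, (1 <= n)%nat /\ circle_C n p.

Definition partial (a1 a2 : nat) (f : R * R -> R) : R * R -> R :=
  pdw (repeat false a1 ++ repeat true a2) f.

(* Main.v *)
Require Import Defs.
From Stdlib Require Import Reals List Lra Lia.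
From Coquelicot Require Import Coquelicot.
Open Scope R_scope.

Lemma cont_of_der (g : R -> R) x : ex_derive g x -> continuity_pt g x.
Proof. intro H. apply continuity_pt_filterlim. apply (ex_derive_continuous g x H). Qed.

Fixpoint Zs (g : R -> R) (k : nat) (a b : R) : Prop :=
  match k with
  | O => True
  | S k' => exists z, a < z <= b /\ g z = 0 /\ Zs g k' z b
  end.

Lemma Zs_ext g1 g2 k a b : (forall x, g1 x = g2 x) -> Zs g1 k a b -> Zs g2 k a b.
Proof.
  intros He; revert a; induction k as [|k IH]; simpl; auto.
  intros a [z [Hz [Hg HZ]]]. exists z. rewrite <- He. auto.
Qed.

Lemma Zs_rolle g k : (forall x, ex_derive g x) ->
  forall a b, Zs g (S k) a b -> Zs (Derive g) k a b.
Proof.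
  intros Hd. induction k as [|k IH]; intros a b H; simpl; auto.
  destruct H as [z1 [Hz1 [Hg1 [z2 [Hz2 [Hg2 HZ]]]]]].
  assert (Hr := Rolle g z1 z2 (fun x _ => ex_derive_Reals_0 g x (Hd x))
     (fun x _ => cont_of_der g x (Hd x)) (proj1 Hz2) (eq_trans Hg1 (eq_sym Hg2))).
  destruct Hr as [w [P Hw]]. rewrite Derive_Reals in Hw.
  exists w. split; [lra|]. split; auto.
  apply IH. simpl. exists z2. split; [lra|]. auto.
Qed.

Lemma step_bound (g : R -> R) D B :
  (forall x, ex_derive g x) -> (forall x, 0 <= x <= D -> Rabs (Derive g x) <= B) ->
  (exists z, 0 < z <= D /\ g z = 0) -> forall x, 0 <= x <= D -> Rabs (g x) <= B * D.
Proof.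
  intros Hd HB [z [Hz Hgz]] x Hx.
  destruct (MVT_gen g z x (Derive g)) as [c [Hc Heq]].
  - intros y _. apply Derive_correct. apply Hd.
  - intros y _. apply cont_of_der, Hd.
  - rewrite Hgz, Rminus_0_r in Heq. rewrite Heq, Rabs_mult.
    assert (0 <= c <= D).
    { split. apply Rle_trans with (Rmin z x); [apply Rmin_glb; lra|lra].
      apply Rle_trans with (Rmax z x); [lra|apply Rmax_lub; lra]. }
    apply Rmult_le_compat; try apply Rabs_pos. apply HB; auto.
    apply Rabs_le; lra.
Qed.

Lemma chain_bound (h : nat -> R -> R) D M :
  0 <= D ->
  (forall j x, ex_derive (h j) x) -> (forall j x, Derive (h j) x = h (S j) x) ->
  forall L j, (forall i, (i < L)%nat -> exists z, 0 < z <= D /\ h (j + i)%nat z = 0) ->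
  (forall x, 0 <= x <= D -> Rabs (h (j + L)%nat x) <= M) ->
  forall x, 0 <= x <= D -> Rabs (h j x) <= M * D ^ L.
Proof.
  intros HD Hd Hh L. induction L as [|L IH]; intros j Hz HM x Hx.
  - simpl. rewrite Nat.add_0_r in HM. rewrite Rmult_1_r. auto.
  - replace (M * D ^ S L) with (M * D ^ L * D) by (simpl; ring).
    apply step_bound; auto.
    + intros y Hy. rewrite Hh. apply IH; auto.
      * intros i Hi. replace (S j + i)%nat with (j + S i)%nat by lia. apply Hz. lia.
      * intros y' Hy'. replace (S j + L)%nat with (j + S L)%nat by lia. auto.
    + destruct (Hz O ltac:(lia)) as [z Hz0]. rewrite Nat.add_0_r in Hz0. exists z; exact Hz0.
Qed.

Lemma Zs_iter (h : nat -> R -> R) D N :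
  (forall j x, ex_derive (h j) x) -> (forall j x, Derive (h j) x = h (S j) x) ->
  Zs (h O) N 0 D -> forall j, (j <= N)%nat -> Zs (h j) (N - j) 0 D.
Proof.
  intros Hd Hh HZ j. induction j as [|j IH]; intros Hj.
  - rewrite Nat.sub_0_r. auto.
  - assert (E : (N - j = S (N - S j))%nat) by lia.
    specialize (IH ltac:(lia)). rewrite E in IH.
    apply Zs_ext with (Derive (h j)); auto. apply Zs_rolle; auto.
Qed.

Lemma lim_zero (g : R -> R) : continuity_pt g 0 ->
  (forall eps, 0 < eps -> exists z, Rabs z < eps /\ Rabs (g z) < eps) -> g 0 = 0.
Proof.
  intros Hc H.
  destruct (Req_dec (g 0) 0) as [E|E]; auto. exfalso.
  set (e := Rabs (g 0) / 2).
  assert (He : 0 < e) by (unfold e; apply Rabs_pos_lt in E; lra).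
  destruct (Hc e He) as [d [Hd Hd2]].
  destruct (H (Rmin d e) ltac:(apply Rmin_glb_lt; lra)) as [z [Hz1 Hz2]].
  assert (Hz : Rabs z < d) by (apply Rlt_le_trans with (Rmin d e); [auto|apply Rmin_l]).
  assert (Hg : Rabs (g z) < e) by (apply Rlt_le_trans with (Rmin d e); [auto|apply Rmin_r]).
  destruct (Req_dec z 0) as [Z|Z].
  - subst z. unfold e in Hg. apply Rabs_pos_lt in E. lra.
  - specialize (Hd2 z). simpl in Hd2. unfold R_dist in Hd2.
    rewrite Rminus_0_r in Hd2. assert (Hd3 := Hd2 (conj (conj I (not_eq_sym Z)) Hz)).
    assert (Rabs (g 0) <= Rabs (g z) + Rabs (g z - g 0)).
    { replace (g 0) with (g z - (g z - g 0)) at 1 by ring. unfold Rminus at 1; eapply Rle_trans; [apply Rabs_triang|rewrite Rabs_Ropp; lra]. }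
    unfold e in *. lra.
Qed.

Lemma flat_x (K : nat -> R -> R) :
  (forall a x, ex_derive (K a) x) -> (forall a x, Derive (K a) x = K (S a) x) ->
  (forall n, exists C eps, 0 < eps /\ forall x, 0 < x < eps -> Rabs (K O x) <= C * x ^ n) ->
  forall a, K a 0 = 0.
Proof.
  intros Hd Hh Hf.
  assert (HDn : forall m x, Derive_n (K O) m x = K m x).
  { induction m as [|m IH]; intros x; simpl; auto. rewrite (Derive_ext _ (K m)); auto. }
  intro a. induction a as [a IHa] using (well_founded_induction Wf_nat.lt_wf).
  apply lim_zero. { apply cont_of_der, Hd. }
  intros eps Heps.
  destruct (Hf (S a)) as [C [e0 [He0 HC]]].
  set (F := INR (Factorial.fact a)).
  assert (HF : 0 < F) by (apply lt_0_INR, Factorial.lt_O_fact).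
  set (A := Rabs C * F + 1).
  assert (HA : 0 < A) by (unfold A; assert (0 <= Rabs C) by apply Rabs_pos; nra).
  set (y := Rmin (e0/2) (Rmin (eps/2) (eps/(2*A)))).
  assert (Hy1 : y <= e0/2) by apply Rmin_l.
  assert (Hy2 : y <= eps/2) by (eapply Rle_trans; [apply Rmin_r|apply Rmin_l]).
  assert (Hy3 : y <= eps/(2*A)) by (eapply Rle_trans; [apply Rmin_r|apply Rmin_r]).
  assert (Hy0 : 0 < y).
  { unfold y. apply Rmin_glb_lt; [lra|apply Rmin_glb_lt]. lra.
    apply Rdiv_lt_0_compat; lra. }
  assert (HAy : A * y <= eps / 2).
  { apply Rmult_le_compat_l with (r := A) in Hy3; [|lra].
    replace (A * (eps / (2 * A))) with (eps/2) in Hy3 by (field; lra). auto. }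
  assert (HK0 := HC y ltac:(lra)).
  assert (HCy : Rabs (C * y ^ S a) <= Rabs C * y ^ S a).
  { rewrite Rabs_mult, (Rabs_pos_eq (y ^ S a)); [lra|]. apply pow_le; lra. }
  destruct a as [|n].
  - exists y. split. rewrite Rabs_pos_eq; lra.
    assert (F1 : F = 1) by (unfold F; simpl; lra).
    unfold A in HAy. rewrite F1 in HAy.
    assert (Rabs (K O y) <= Rabs C * y). { eapply Rle_trans; [exact HK0|]. eapply Rle_trans; [apply Rle_abs|]. eapply Rle_trans; [exact HCy|]. simpl; lra. }
    assert (0 <= Rabs C) by apply Rabs_pos. nra.
  - destruct (Taylor_Lagrange (K O) n 0 y Hy0) as [z [Hz Heq]].
    { intros t _ k _. destruct k; simpl; auto.
      apply ex_derive_ext with (K k). intros; rewrite HDn; auto. apply Hd. }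
    rewrite sum_eq_R0 in Heq.
    2:{ intros m Hm. rewrite HDn, IHa by lia. ring. }
    rewrite HDn, Rminus_0_r, Rplus_0_l in Heq.
    exists z. split. rewrite Rabs_pos_eq; lra.
    assert (Hyp : 0 < y ^ S n) by (apply pow_lt; lra).
    assert (E : K (S n) z = K O y * F / y ^ S n).
    { rewrite Heq. fold F. field. split; apply Rgt_not_eq; lra. }
    assert (Hb : Rabs (K O y) <= Rabs C * y ^ S n * y). { eapply Rle_trans; [exact HK0|]. eapply Rle_trans; [apply Rle_abs|]. eapply Rle_trans; [exact HCy|]. rewrite <- tech_pow_Rmult. lra. }
    rewrite E. unfold Rdiv. rewrite !Rabs_mult, Rabs_inv, (Rabs_pos_eq F), (Rabs_pos_eq (y ^ S n)) by lra.
    apply Rle_lt_trans with (Rabs C * y ^ S n * y * F * / y ^ S n).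
    + apply Rmult_le_compat_r. left; apply Rinv_0_lt_compat; lra.
      apply Rmult_le_compat_r; lra.
    + replace (Rabs C * y ^ S n * y * F * / y ^ S n) with (Rabs C * F * y) by (field; lra).
      unfold A in HAy. lra.
Qed.

Lemma ball0 (d : posreal) t s : Rabs t < d -> Rabs s < d -> ball ((0,0):R*R) d (t,s).
Proof.
  intros. split; simpl;
  unfold ball; simpl; unfold AbsRing_ball, abs, minus, plus, opp; simpl;
  rewrite Ropp_0, Rplus_0_r; auto.
Qed.


Definition yv (t : R) (n : nat) := sqrt (2 * t / INR n - t ^ 2).

Lemma yv_arg (t : R) (Ht : 0 < t) n : (1 <= n)%nat -> INR n * t < 2 -> 0 < 2 * t / INR n - t ^ 2.
Proof.
  intros Hn Hnt. assert (Hn' : 1 <= INR n) by (apply (le_INR 1); auto).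
  replace (2 * t / INR n - t ^ 2) with (t * (2 - INR n * t) / INR n) by (field; lra).
  apply Rdiv_lt_0_compat; [apply Rmult_lt_0_compat|]; lra.
Qed.

Lemma yv_pos (t : R) (Ht : 0 < t) n : (1 <= n)%nat -> INR n * t < 2 -> 0 < yv t n.
Proof. intros. apply sqrt_lt_R0, yv_arg; auto. Qed.

Lemma yv_le (t : R) (Ht : 0 < t) n : (1 <= n)%nat -> yv t n <= sqrt (2 * t).
Proof.
  intros Hn. assert (Hn' : 1 <= INR n) by (apply (le_INR 1); auto).
  apply sqrt_le_1_alt.
  assert (2 * t / INR n <= 2 * t).
  { unfold Rdiv. rewrite <- (Rmult_1_r (2*t)) at 2. apply Rmult_le_compat_l; [lra|].
    rewrite <- Rinv_1. apply Rinv_le_contravar; lra. }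
  assert (0 <= t ^ 2) by (apply pow_le; lra). lra.
Qed.

Lemma yv_dec (t : R) (Ht : 0 < t) n : (1 <= n)%nat -> INR (S n) * t < 2 -> yv t (S n) < yv t n.
Proof.
  intros Hn Hnt. assert (Hn' : 1 <= INR n) by (apply (le_INR 1); auto).
  assert (E : INR (S n) = INR n + 1) by (rewrite S_INR; auto).
  apply sqrt_lt_1_alt. split. left; apply yv_arg; auto.
  assert (2 * t / INR (S n) < 2 * t / INR n); [|lra].
  rewrite E. unfold Rdiv. apply Rmult_lt_compat_l; [lra|].
  apply Rinv_lt_contravar; nra.
Qed.

Lemma yv_zero (f : R * R -> R) (Hvan : forall p, hawaiian p -> f p = 0) (t : R) (Ht : 0 < t) n : (1 <= n)%nat -> INR n * t < 2 -> f (t, yv t n) = 0.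
Proof.
  intros Hn Hnt. assert (Hn' : 1 <= INR n) by (apply (le_INR 1); auto).
  apply Hvan. exists n. split; auto. unfold circle_C. simpl fst; simpl snd.
  unfold yv. rewrite pow2_sqrt by (left; apply yv_arg; auto).
  field. lra.
Qed.

Lemma zeros_constr (f : R * R -> R) (Hvan : forall p, hawaiian p -> f p = 0) (t : R) (Ht : 0 < t) : forall k, INR (S k) * t < 2 -> forall a, a < yv t (S k) ->
  Zs (fun s => f (t, s)) (S k) a (sqrt (2 * t)).
Proof.
  induction k as [|k IH]; intros Hk a Ha; simpl Zs.
  - exists (yv t 1). split; [split; [auto|apply yv_le; auto]|]. split; auto.
    apply yv_zero; auto.
  - exists (yv t (S (S k))). split; [split; [auto|apply yv_le; [auto|lia]]|]. split.
    + apply yv_zero; auto; lia.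
    + assert (INR (S k) * t < 2).
      { apply Rle_lt_trans with (INR (S (S k)) * t); auto.
        apply Rmult_le_compat_r; [lra|]. apply le_INR; lia. }
      apply IH; auto. apply yv_dec; auto; lia.
Qed.

Theorem theorem4 (f : R * R -> R) (Hf : smooth2 f)
  (Hvan : forall p, hawaiian p -> f p = 0) :
  forall a1 a2 : nat, partial a1 a2 f (0, 0) = 0.
Proof.
  intros a1 b.
  set (K := fun a x => pdw (repeat false a ++ repeat true b) f (x, 0)).
  change (K a1 0 = 0).
  apply flat_x.
  - intros a x. exact (proj2 (Hf (repeat false a ++ repeat true b)) false (x, 0)).
  - intros a x. reflexivity.
  - intros n.
    set (L := (2 * n)%nat). set (N := S (b + L)).
    set (G := pdw (repeat true (b + L)) f).
    assert (HG := proj1 (Hf (repeat true (b + L))) (0, 0)).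
    fold G in HG.
    destruct (proj1 (filterlim_locally G (G (0,0))) HG (mkposreal 1 Rlt_0_1)) as [d Hd].
    set (M := Rabs (G (0,0)) + 1).
    assert (HM : forall q, ball (0,0) d q -> Rabs (G q) <= M).
    { intros q Hq. specialize (Hd q Hq). change (Rabs (G q - G (0,0)) < 1) in Hd.
      unfold M. assert (Rabs (G q) <= Rabs (G (0,0)) + Rabs (G q - G (0,0))).
      { replace (G q) with (G (0,0) + (G q - G (0,0))) at 1 by ring. apply Rabs_triang. }
      lra. }
    assert (HN : 0 < INR N) by (apply lt_0_INR; unfold N; lia).
    assert (Hdp := cond_pos d).
    exists (M * 2 ^ n), (Rmin d (Rmin (d * d / 2) (/ INR N))).
    split. { apply Rmin_glb_lt; [lra|apply Rmin_glb_lt]. nra. apply Rinv_0_lt_compat; lra. }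
    intros t [Ht Htl].
    assert (Ht1 : t < d) by (eapply Rlt_le_trans; [exact Htl|apply Rmin_l]).
    assert (Ht2 : t < d * d / 2) by (eapply Rlt_le_trans; [exact Htl|]; eapply Rle_trans; [apply Rmin_r|apply Rmin_l]).
    assert (Ht3 : t < / INR N) by (eapply Rlt_le_trans; [exact Htl|]; eapply Rle_trans; [apply Rmin_r|apply Rmin_r]).
    set (D := sqrt (2 * t)).
    assert (HD0 : 0 <= D) by apply sqrt_pos.
    assert (HDd : D < d).
    { unfold D. rewrite <- (sqrt_square d) by lra. apply sqrt_lt_1_alt. lra. }
    set (h := fun j s => pdw (repeat true j) f (t, s)).
    assert (Hhd : forall j x, ex_derive (h j) x).
    { intros j x. exact (proj2 (Hf (repeat true j)) true (t, x)). }
    assert (Hhh : forall j x, Derive (h j) x = h (S j) x) by reflexivity.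
    assert (HZ : Zs (h O) N 0 D).
    { unfold N. apply zeros_constr; auto.
      - apply Rlt_trans with 1; [|lra].
        apply Rmult_lt_compat_l with (r := INR N) in Ht3; auto.
        rewrite Rinv_r in Ht3 by lra. exact Ht3.
      - apply yv_pos; auto. lia.
        apply Rlt_trans with 1; [|lra].
        apply Rmult_lt_compat_l with (r := INR N) in Ht3; auto.
        rewrite Rinv_r in Ht3 by lra. exact Ht3. }
    assert (Hb := chain_bound h D M HD0 Hhd Hhh L b).
    assert (Hb0 : Rabs (h b 0) <= M * D ^ L).
    { apply Hb.
      - intros i Hi. assert (Hz := Zs_iter h D N Hhd Hhh HZ (b + i) ltac:(unfold N; lia)).
        replace (N - (b + i))%nat with (S (N - (b + i) - 1)) in Hz by (unfold N; lia).
        destruct Hz as [z [Hz1 [Hz2 _]]]. exists z. auto.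
      - intros x Hx. apply HM. apply ball0.
        + rewrite Rabs_pos_eq; lra.
        + rewrite Rabs_pos_eq; lra.
      - lra. }
    change (Rabs (h b 0) <= M * 2 ^ n * t ^ n).
    replace (M * 2 ^ n * t ^ n) with (M * D ^ L); auto.
    unfold L, D. rewrite pow_mult. replace (sqrt (2 * t) ^ 2) with (2 * t).
    rewrite Rpow_mult_distr. ring.
    rewrite pow2_sqrt; lra.
Qed.
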